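(* Let $n\ge1$. The map $\varphi:\Pi_n\to\Pi_n$ described below is well defined (at every step $i\in\mathcal C(\pi)\cup\mathcal T(\pi)$ the current vacant set $V'$ has at least $\gamma_i(\pi)$ elements, and the resulting set of edges is the edge set of a partition of $[n]$), it is an involution, and it preserves the type: $\lambda(\varphi(\pi))=\lambda(\pi)$ for all $\pi\in\Pi_n$. Construction of $\varphi(\pi)$: start with $V'=\emptyset$ and an empty edge set $E'$. For $i=1,2,\dots,n$: if $i$ is an opener of $\pi$, add $i$ to $V'$; if $i$ is a singleton of $\pi$, do nothing; if $i$ is a closer or transient of $\pi$, let $x$ be the $\gamma_i(\pi)$-th largest element of $V'$, add the edge $(x,i)$ to $E'$ and remove $x$ from $V'$, and moreover if $i$ is a transient of $\pi$, add $i$ to $V'$. Then $\varphi(\pi)$ is the partition of $[n]$ whose edges are exactly $E'$ (blocks are the connected components of the graph $([n],E')$).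
   Context: A partition of $[n]=\{1,\dots,n\}$ is a set of pairwise disjoint nonempty subsets (blocks) of $[n]$ whose union is $[n]$; $\Pi_n$ is the set of partitions of $[n]$. The edges of $\pi$ are the pairs $(i,j)$, $i<j$, with $i,j$ consecutive elements of the same block. For a block $B$ with $|B|\ge2$, its minimum is an opener, its maximum is a closer, its other elements are transients; the element of a one-element block is a singleton. $\mathcal O(\pi),\mathcal C(\pi),\mathcal S(\pi),\mathcal T(\pi)$ are the sets of openers, closers, singletons, transients, and $\lambda(\pi)=(\mathcal O(\pi),\mathcal C(\pi),\mathcal S(\pi),\mathcal T(\pi))$ is the type of $\pi$. For $i\in[n]$, the vacant vertices of $\pi$ before $i$ are the elements $x\le i-1$ which are the left endpoint of an edge $(x,y)$ of $\pi$ with $y\ge i$. If $i\in\mathcal C(\pi)\cup\mathcal T(\pi)$, there is a unique edge $(j,i)$ of $\pi$ with $j<i$, and $\gamma_i(\pi)$ denotes the rank of $j$ among the vacant vertices of $\pi$ before $i$, listed in increasing order (so $\gamma_i(\pi)=1$ if $j$ is the smallest one). *)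

(* Defs.v *)
From mathcomp Require Import all_boot all_order.
Set Implicit Arguments. Unset Strict Implicit. Unset Printing Implicit Defensive.

(* [n] = {1,...,n} is modelled by 'I_n = {0,...,n-1} (shift by one; order-preserving).
   A partition of [n] is P : {set {set 'I_n}} with  partition P [set: 'I_n]. *)

Section SetPartitions.
Variable n : nat.
Implicit Types (P : {set {set 'I_n}}) (i x y : 'I_n).

Definition edge P x y : bool :=
  (x < y) && [exists B in P, [&& x \in B, y \in B &
       [forall z in B, ~~ ((x < z) && (z < y))]]].

Definition opener P x : bool :=
  (1 < #|pblock P x|) && [forall y in pblock P x, x <= y].
Definition closer P x : bool :=
  (1 < #|pblock P x|) && [forall y in pblock P x, y <= x].
Definition singleton P x : bool := #|pblock P x| == 1.
Definition transient P x : bool :=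
  (1 < #|pblock P x|) && ~~ opener P x && ~~ closer P x.

Definition ptype P :=
  ([set x | opener P x], [set x | closer P x],
   [set x | singleton P x], [set x | transient P x]).

Definition vacant P i : {set 'I_n} :=
  [set x : 'I_n | (x < i) && [exists y : 'I_n, (i <= y) && edge P x y]].

Definition leftnb P i : option 'I_n := [pick j | edge P j i].

Definition gamma P i : nat :=
  if leftnb P i is Some j then #|[set x in vacant P i | x <= j]| else 0.

Definition phi_step P (st : {set 'I_n} * seq ('I_n * 'I_n)) (i : 'I_n) :=
  let: (V, E) := st in
  if opener P i then (i |: V, E)
  else if closer P i || transient P i then
    (* gamma_i-th largest element of V' *)
    let x := nth i (sort (fun a b : 'I_n => b <= a) (enum V)) (gamma P i).-1 in
    let V1 := V :\ x in
    ((if transient P i then i |: V1 else V1), (x, i) :: E)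
  else (V, E).

(* state just before processing the k-th element (0-based), i.e. after
   processing 0, ..., k-1 *)
Definition phi_state P (k : nat) :=
  foldl (phi_step P) (set0, [::]) (take k (enum 'I_n)).

Definition Vcur P i : {set 'I_n} := (phi_state P i).1.

Definition phiE P : rel 'I_n := fun x y => (x, y) \in (phi_state P n).2.

Definition phi P : {set {set 'I_n}} :=
  equivalence_partition
    (connect (fun a b => phiE P a b || phiE P b a)) [set: 'I_n].

End SetPartitions.

(* Main.v *)
Require Import Defs.
From mathcomp Require Import all_boot all_order.
From mathcomp Require Import zify.
Set Implicit Arguments. Unset Strict Implicit. Unset Printing Implicit Defensive.

Section Main.
Variable n : nat.

Definition hasR (P : {set {set 'I_n}}) (x : 'I_n) := [exists y, edge P x y].
Definition hasL (P : {set {set 'I_n}}) (x : 'I_n) := [exists y, edge P y x].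
Definition symr (e : rel 'I_n) : rel 'I_n := fun a b => e a b || e b a.

Section Fixed.
Variable P : {set {set 'I_n}}.
Hypothesis hP : partition P [set: 'I_n].

Let triv : trivIset P. Proof. by case/and3P: hP. Qed.
Let cov x : x \in cover P. Proof. by case/and3P: hP => /eqP -> _ _; rewrite inE. Qed.

Lemma mem_pb x : x \in pblock P x.
Proof. by rewrite mem_pblock cov. Qed.

Lemma pbE x y : y \in pblock P x -> pblock P y = pblock P x.
Proof. by move=> h; apply/esym/eqP; rewrite eq_pblock ?cov. Qed.

Lemma pb_sym x y : (y \in pblock P x) = (x \in pblock P y).
Proof. by rewrite -eq_pblock ?cov // eq_sym eq_pblock ?cov. Qed.

Lemma edgeE x y : edge P x y =
  [&& x < y, y \in pblock P x & [forall z in pblock P x, ~~ ((x < z) && (z < y))]].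
Proof.
rewrite /edge; case: (x < y) => //=.
apply/existsP/andP.
- case=> B /andP[BP /and3P[xB yB H]].
  by rewrite (def_pblock triv BP xB).
- case=> yB H; exists (pblock P x).
  by rewrite pblock_mem ?cov // mem_pb yB H.
Qed.

Lemma hasRE x : hasR P x = [exists z in pblock P x, x < z].
Proof.
apply/existsP/existsP.
- case=> y; rewrite edgeE => /and3P[xy yB _]. by exists y; rewrite yB xy.
- case=> z /andP[zB xz].
  pose A := [pred w : 'I_n | (w \in pblock P x) && (x < w)].
  have Az : A z by rewrite /A /= zB xz.
  case: (arg_minnP (fun w : 'I_n => val w) Az) => y /andP[yB xy] ymin.
  exists y; rewrite edgeE xy yB /=.
  apply/forallP=> w; apply/implyP=> wB; apply/negP=> /andP[xw wy].
  have := ymin w; rewrite /A /= wB xw => /(_ isT). by rewrite leqNgt wy.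
Qed.

Lemma hasLE x : hasL P x = [exists z in pblock P x, z < x].
Proof.
apply/existsP/existsP.
- case=> y; rewrite edgeE => /and3P[yx xB _]. by exists y; rewrite -pb_sym xB yx.
- case=> z /andP[zB zx].
  pose A := [pred w : 'I_n | (w \in pblock P x) && (w < x)].
  have Az : A z by rewrite /A /= zB zx.
  case: (arg_maxnP (fun w : 'I_n => val w) Az) => y /andP[yB yx] ymax.
  exists y; rewrite edgeE yx pb_sym yB /= (pbE yB).
  apply/forallP=> w; apply/implyP=> wB; apply/negP=> /andP[yw wx].
  have := ymax w; rewrite /A /= wB wx => /(_ isT). by rewrite leqNgt yw.
Qed.

Lemma card_gt1 x : (1 < #|pblock P x|) = hasL P x || hasR P x.
Proof.
rewrite hasLE hasRE; apply/card_gt1P/orP.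
- case=> a [b [aB bB ab]].
  have [z [zB zx]] : exists z, z \in pblock P x /\ z != x.
    case: (eqVneq a x) => [ax|ax]; last by exists a.
    by exists b; split => //; rewrite -ax eq_sym.
  move: zx; rewrite neq_ltn => /orP[h|h]; [left|right]; apply/existsP; exists z;
    by rewrite zB h.
- case=> /existsP[z /andP[zB h]]; exists z, x; rewrite zB mem_pb; split => //;
    apply/eqP => e; by rewrite e ltnn in h.
Qed.

Lemma forall_ge x : [forall y in pblock P x, x <= y] = ~~ hasL P x.
Proof.
rewrite hasLE negb_exists; apply: eq_forallb => y.
by rewrite negb_and implybE leqNgt.
Qed.

Lemma forall_le x : [forall y in pblock P x, y <= x] = ~~ hasR P x.
Proof.
rewrite hasRE negb_exists; apply: eq_forallb => y.
by rewrite negb_and implybE leqNgt.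
Qed.

Lemma openerE x : opener P x = hasR P x && ~~ hasL P x.
Proof. by rewrite /opener card_gt1 forall_ge; case: (hasL P x); case: (hasR P x). Qed.

Lemma closerE x : closer P x = hasL P x && ~~ hasR P x.
Proof. by rewrite /closer card_gt1 forall_le; case: (hasL P x); case: (hasR P x). Qed.

Lemma transientE x : transient P x = hasL P x && hasR P x.
Proof.
by rewrite /transient card_gt1 openerE closerE; case: (hasL P x); case: (hasR P x).
Qed.

Lemma singletonE x : singleton P x = ~~ hasL P x && ~~ hasR P x.
Proof.
have h0 : 0 < #|pblock P x| by apply/card_gt0P; exists x; exact: mem_pb.
rewrite /singleton -negb_or -card_gt1.
by move: h0; case: #|_| => [|[|m]].
Qed.

Lemma edge_r x y y' : edge P x y -> edge P x y' -> y = y'.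
Proof.
rewrite !edgeE => /and3P[xy yB H] /and3P[xy' y'B H'].
apply: val_inj => /=; case: (ltngtP y y') => // h.
- by move/forallP: H' => /(_ y); rewrite yB xy h.
- by move/forallP: H => /(_ y'); rewrite y'B xy' h.
Qed.

Lemma edge_l x x' y : edge P x y -> edge P x' y -> x = x'.
Proof.
rewrite !edgeE => /and3P[xy yB H] /and3P[x'y yB' H'].
have e1 : pblock P x = pblock P x'.
  by rewrite -(pbE yB) (pbE yB').
apply: val_inj => /=; case: (ltngtP x x') => // h.
- move/forallP: H => /(_ x'); rewrite e1 mem_pb h x'y //.
- move/forallP: H' => /(_ x); rewrite -e1 mem_pb h xy //.
Qed.

Lemma edge_conn x y : y \in pblock P x -> connect (symr (edge P)) x y.
Proof.
have symE : connect_sym (symr (edge P)).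
  by apply: sym_connect_sym => a b; rewrite /symr orbC.
have main : forall d (x y : 'I_n), y - x <= d -> x < y -> y \in pblock P x ->
    connect (symr (edge P)) x y.
  elim=> [|d IH] a b.
    by move=> h ab; exfalso; move: h ab; lia.
  move=> hd ab bB.
  have : hasR P a by rewrite hasRE; apply/existsP; exists b; rewrite bB ab.
  case/existsP=> c ac.
  have := ac; rewrite edgeE => /and3P[ac' cB H].
  have cb : c <= b.
    rewrite leqNgt; apply/negP=> bc.
    by move/forallP: H => /(_ b); rewrite bB ab bc.
  have ac1 : connect (symr (edge P)) a c by apply: connect1; rewrite /symr ac.
  apply: (connect_trans ac1).
  case: (ltngtP c b) cb => // [cb _|/val_inj -> _]; last exact: connect0.
  apply: IH => //; first by move: hd ab ac'; clear; lia.
  by rewrite (pbE cB).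
case: (ltngtP x y) => [xy|yx|/val_inj ->] yB; last exact: connect0.
- exact: (main (y - x)).
- rewrite symE; apply: (main (x - y)) => //; by rewrite -pb_sym.
Qed.

Lemma conn_pb x y : connect (symr (edge P)) x y -> y \in pblock P x.
Proof.
move/connectP=> [p pth ->] {y}.
elim: p x pth => [|z p IH] x /=; first by rewrite mem_pb.
case/andP=> e pth; have := IH z pth.
have zx : z \in pblock P x.
  case/orP: e; rewrite edgeE => /and3P[_ h _] //; by rewrite pb_sym.
by rewrite (pbE zx).
Qed.

Lemma partition_of_edges (e : rel 'I_n) : (forall a b, e a b = edge P a b) ->
  equivalence_partition (connect (symr e)) [set: 'I_n] = P.
Proof.
move=> he.
rewrite -[RHS](preim_partition_pblock hP) /preim_partition /equivalence_partition.
apply: eq_imset => x; apply/setP => y; rewrite !inE eq_pblock ?cov //.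
have -> : connect (symr e) x y = connect (symr (edge P)) x y.
  by apply: eq_connect => a b; rewrite /symr !he.
by apply/idP/idP; [exact: conn_pb | exact: edge_conn].
Qed.

End Fixed.

Section Build.
Variable F : rel 'I_n.
Hypothesis Flt : forall x y, F x y -> x < y.
Hypothesis Fr : forall x y y', F x y -> F x y' -> y = y'.
Hypothesis Fl : forall x x' y, F x y -> F x' y -> x = x'.

Let e := symr F.
Let Q := equivalence_partition (connect e) [set: 'I_n].

Let eqv : {in [set: 'I_n] & &, equivalence_rel (connect e)}.
Proof.
have symE : connect_sym e by apply: sym_connect_sym => a b; rewrite /e /symr orbC.
move=> x y z _ _ _; split; first exact: connect0.
move=> cxy; apply/idP/idP => h.
- by apply: (connect_trans _ h); rewrite symE.
- exact: (connect_trans cxy h).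
Qed.

Lemma Q_part : partition Q [set: 'I_n].
Proof. exact: equivalence_partitionP eqv. Qed.

Lemma Q_pb x y : (y \in pblock Q x) = connect e x y.
Proof. by rewrite (pblock_equivalence_partition eqv) ?inE. Qed.

Lemma connF_le x w : connect F x w -> x <= w.
Proof.
move/connectP=> [p pth ->] {w}.
elim: p x pth => [|z p IH] x //= /andP[xz pth].
exact: (leq_trans (ltnW (Flt xz)) (IH z pth)).
Qed.

Lemma connF_first x w : connect F x w -> x != w -> exists2 u, F x u & connect F u w.
Proof.
move/connectP=> [[|u p] /= pth ->]; first by rewrite eqxx.
case/andP: pth => xu pth _; exists u => //; apply/connectP; by exists p.
Qed.

Lemma connF_last x w : connect F x w -> x != w -> exists2 u, connect F x u & F u w.
Proof.
move/connectP=> [p pth ->]; case/lastP: p pth => [|p u] /=; first by rewrite eqxx.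
rewrite rcons_path last_rcons => /andP[pth lu] _.
exists (last x p) => //; apply/connectP; by exists p.
Qed.

Lemma conn_dir x w : connect e x w -> connect F x w || connect F w x.
Proof.
move/connectP=> [p pth ->] {w}.
elim/last_ind: p pth => [|p v IH] /=; first by rewrite connect0.
rewrite rcons_path last_rcons => /andP[pth euv].
set u := last x p in IH euv *.
case/orP: (IH pth) => [cxu|cux]; case/orP: euv => [Fuv|Fvu].
- by rewrite (connect_trans cxu (connect1 Fuv)).
- case: (eqVneq x u) => [xu|xu].
    by rewrite xu (connect1 Fvu) orbT.
  case: (connF_last cxu xu) => u' cxu' Fu'u.
  by rewrite -(Fl Fu'u Fvu) cxu'.
- case: (eqVneq u x) => [ux|ux].
    by rewrite -ux (connect1 Fuv).
  case: (connF_first cux ux) => u' Fuu' cu'x.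
  by rewrite -(Fr Fuu' Fuv) cu'x orbT.
- by rewrite (connect_trans (connect1 Fvu) cux) orbT.
Qed.

Lemma edgeQ x y : edge Q x y = F x y.
Proof.
rewrite (edgeE Q_part) !Q_pb.
apply/and3P/idP.
- case=> xy cxy H.
  have cF : connect F x y.
    case/orP: (conn_dir cxy) => // /connF_le; by rewrite leqNgt xy.
  have xny : x != y by apply/eqP=> h; rewrite h ltnn in xy.
  case: (connF_first cF xny) => u Fxu cuy.
  have uy := connF_le cuy.
  case: (ltngtP u y) uy => [uy' _|//|/val_inj <- //].
  move/forallP: H => /(_ u); rewrite Q_pb.
  by rewrite (connect1 (_ : e x u)) /= ?(Flt Fxu) ?uy' // /e /symr Fxu.
- move=> Fxy; split; first exact: Flt.
    by apply: connect1; rewrite /e /symr Fxy.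
  apply/forallP=> z; apply/implyP; rewrite Q_pb => cxz; apply/negP=> /andP[xz zy].
  have cF : connect F x z.
    case/orP: (conn_dir cxz) => // /connF_le; by rewrite leqNgt xz.
  have xnz : x != z by apply/eqP=> h; rewrite h ltnn in xz.
  case: (connF_first cF xnz) => u Fxu cuz.
  rewrite -(Fr Fxy Fxu) in cuz.
  by move: (connF_le cuz); rewrite leqNgt zy.
Qed.

End Build.

Definition ger : rel 'I_n := fun a b => b <= a.

Lemma nth_sort_rank (V : {set 'I_n}) k d : k < #|V| ->
  let x := nth d (sort ger (enum V)) k in
  (x \in V) /\ #|[set z in V | x <= z]| = k.+1.
Proof.
move=> hk x.
set s := sort ger (enum V).
have ps : perm_eq s (enum V) by rewrite /s perm_sort perm_refl.
have us : uniq s by rewrite (perm_uniq ps) enum_uniq.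
have ss : size s = #|V| by rewrite (perm_size ps) cardE.
have ms : s =i V by move=> z; rewrite (perm_mem ps) mem_enum.
have tot : total ger by move=> a b; rewrite /ger orbC leq_total.
have tr : transitive ger by move=> b a c; rewrite /ger => h1 h2; exact: leq_trans h2 h1.
have srt : sorted ger s := sort_sorted tot _.
have strict : forall i j, i < j -> j < size s -> nth d s j < nth d s i.
  move=> i j ij js.
  have is_ : i < size s by exact: ltn_trans ij js.
  have h1 := sorted_ltn_nth tr d srt i j is_ js ij.
  have h2 : nth d s j != nth d s i by rewrite nth_uniq // eq_sym neq_ltn ij.
  by rewrite ltn_neqAle h2; exact: h1.
split; first by rewrite -ms mem_nth // ss.
have -> : #|[set z in V | x <= z]| = count (fun z : 'I_n => x <= z) s.
  rewrite -size_filter -(card_uniqP (filter_uniq _ us)).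
  by apply: eq_card => z; rewrite !inE mem_filter ms andbC.
rewrite -(cat_take_drop k.+1 s) count_cat.
have hk' : k.+1 <= size s by rewrite ss.
have -> : count (fun z : 'I_n => x <= z) (take k.+1 s) = k.+1.
  rewrite -{2}(size_takel hk'); apply/eqP; rewrite -all_count.
  apply/(all_nthP d) => i; rewrite (size_takel hk') => hi.
  rewrite nth_take //.
  case: (ltngtP i k) hi => [ik _|ki hi|-> _]; last by []; last by move: ki hi; clear; lia.
  by rewrite ltnW // strict.
have -> : count (fun z : 'I_n => x <= z) (drop k.+1 s) = 0.
  apply/eqP; rewrite -leqn0 leqNgt -has_count -all_predC.
  apply/(all_nthP d) => i; rewrite size_drop => hi.
  by rewrite nth_drop /= -ltnNge strict //; move: hi; clear; lia.
by rewrite addn0.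
Qed.

Lemma rank_compl (S : {set 'I_n}) x : x \in S ->
  #|[set z in S | x <= z]| + #|[set z in S | z <= x]| = #|S| + 1.
Proof.
move=> xS; rewrite -cardsUI.
have -> : [set z in S | x <= z] :|: [set z in S | z <= x] = S.
  by apply/setP=> z; rewrite !inE -andb_orr leq_total andbT.
have -> : [set z in S | x <= z] :&: [set z in S | z <= x] = [set x].
  apply/setP=> z; rewrite !inE andbACA andbb.
  apply/idP/eqP => [/andP[_ h]|->]; last by rewrite xS leqnn.
  by apply: val_inj; apply/eqP; rewrite eqn_leq andbC.
by rewrite cards1.
Qed.

Lemma rank_inj (S : {set 'I_n}) x y : x \in S -> y \in S ->
  #|[set z in S | x <= z]| = #|[set z in S | y <= z]| -> x = y.
Proof.
have key : forall a b, a \in S -> b \in S -> a < b ->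
    #|[set z in S | b <= z]| < #|[set z in S | a <= z]|.
  move=> a b aS bS ab; apply: proper_card; apply/properP; split.
    by apply/subsetP=> z; rewrite !inE => /andP[-> h]; rewrite (leq_trans (ltnW ab) h).
  by exists a; rewrite !inE aS /= ?leqnn // -ltnNge.
move=> xS yS h; apply: val_inj; case: (ltngtP x y) => // lt.
- by have := key _ _ xS yS lt; rewrite h ltnn.
- by have := key _ _ yS xS lt; rewrite h ltnn.
Qed.

Definition upd (bL bR : bool) (i a : 'I_n) (A : {set 'I_n}) : {set 'I_n} :=
  (if bR then (fun B => i |: B) else id) (if bL then A :\ a else A).

Lemma mem_upd (bL bR : bool) (i a : 'I_n) (A : {set 'I_n}) z :
  (z \in upd bL bR i a A) = (bR && (z == i)) || ((z \in A) && ~~ (bL && (z == a))).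
Proof. by rewrite /upd; case: bR; case: bL; rewrite ?inE /= ?andbT // andbC. Qed.

Lemma card_upd (bL bR : bool) (i a : 'I_n) (A : {set 'I_n}) : (bL -> a \in A) -> i \notin A ->
  #|upd bL bR i a A| + bL = #|A| + bR.
Proof.
move=> ha hi; rewrite /upd.
case: bL ha => ha; case: bR => /=.
- have ai : a \in A by exact: ha.
  by rewrite cardsU1 !inE negb_and hi orbT [in RHS](cardsD1 a) ai.
- have ai : a \in A by exact: ha.
  by rewrite [in RHS](cardsD1 a) ai /= addn0 addnC.
- by rewrite cardsU1 hi addn0 addnC.
- by rewrite addn0.
Qed.

Definition vacn (P : {set {set 'I_n}}) (k : nat) : {set 'I_n} :=
  [set x : 'I_n | (x < k) && [exists y : 'I_n, (k <= y) && edge P x y]].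

Definition chosen (P : {set {set 'I_n}}) (V : {set 'I_n}) (i : 'I_n) : 'I_n :=
  nth i (sort ger (enum V)) (gamma P i).-1.

Definition lnb (P : {set {set 'I_n}}) (i : 'I_n) : 'I_n := odflt i (leftnb P i).

Lemma stepE P : partition P [set: 'I_n] -> forall V Ls i,
  phi_step P (V, Ls) i =
  (upd (hasL P i) (hasR P i) i (chosen P V i) V,
   if hasL P i then (chosen P V i, i) :: Ls else Ls).
Proof.
move=> hP V Ls i; rewrite /phi_step (openerE hP) (closerE hP) (transientE hP).
by case: (hasL P i); case: (hasR P i).
Qed.

Lemma stS P k (hk : k < n) :
  phi_state P k.+1 = phi_step P (phi_state P k) (Ordinal hk).
Proof.
rewrite /phi_state (take_nth (Ordinal hk)) ?size_enum_ord // foldl_rcons.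
congr (phi_step _ _ _); apply: val_inj; by rewrite /= nth_enum_ord.
Qed.

Lemma memLs (b : bool) (p q : 'I_n * 'I_n) Ls :
  (p \in (if b then q :: Ls else Ls)) = (b && (p == q)) || (p \in Ls).
Proof. by case: b; rewrite ?inE. Qed.

Section Run.
Variable P : {set {set 'I_n}}.
Hypothesis hP : partition P [set: 'I_n].

Lemma leftnb_some i : hasL P i -> leftnb P i = Some (lnb P i) /\ edge P (lnb P i) i.
Proof.
rewrite /lnb /leftnb; case: pickP => [j hj|h] //=.
by case/existsP=> y hy; rewrite h in hy.
Qed.

Lemma lnb_edge i : hasL P i -> edge P (lnb P i) i.
Proof. by case/leftnb_some. Qed.

Lemma lnb_in i : hasL P i -> lnb P i \in vacn P i.
Proof.
move=> hL; have e := lnb_edge hL.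
have lt : lnb P i < i by move: (e); rewrite /edge => /andP[].
rewrite inE lt /=.
by apply/existsP; exists i; rewrite leqnn e.
Qed.

Lemma gammaE i : hasL P i -> gamma P i = #|[set x in vacn P i | x <= lnb P i]|.
Proof. by move=> hL; rewrite /gamma (proj1 (leftnb_some hL)). Qed.

Lemma gamma_bounds i : hasL P i -> 0 < gamma P i <= #|vacn P i|.
Proof.
move=> hL; rewrite gammaE //; apply/andP; split.
  by apply/card_gt0P; exists (lnb P i); rewrite inE lnb_in // leqnn.
by apply: subset_leq_card; apply/subsetP => x; rewrite inE => /andP[].
Qed.

Lemma vacnS k (hk : k < n) :
  vacn P k.+1 = upd (hasL P (Ordinal hk)) (hasR P (Ordinal hk)) (Ordinal hk)
                    (lnb P (Ordinal hk)) (vacn P k).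
Proof.
set i := Ordinal hk.
have iv : nat_of_ord i = k by [].
apply/setP => x; rewrite mem_upd !inE.
case: (ltngtP x k) => xk.
- have xi : (x == i) = false by apply/negbTE/eqP => e; rewrite e iv ltnn in xk.
  rewrite xi andbF /= ltnS (ltnW xk) /=.
  case: (boolP (edge P x i)) => exi.
  + have hL : hasL P i by apply/existsP; exists x.
    have -> : lnb P i = x by apply: (edge_l hP (lnb_edge hL) exi).
    rewrite hL eqxx /= andbF; apply/negbTE; rewrite negb_exists; apply/forallP => y.
    apply/negP => /andP[ky exy]; rewrite -(edge_r hP exi exy) iv ltnn in ky.
    by [].
  + have -> : (hasL P i && (x == lnb P i)) = false.
      apply/negbTE/negP => /andP[hL /eqP e]; move: exi; by rewrite e lnb_edge.
    rewrite andbT; apply: eq_existsb => y.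
    case: (eqVneq (k : nat) y) => [ky|ky]; last by rewrite ltn_neqAle ky.
    have -> : y = i by apply: val_inj; rewrite /= -ky.
    by rewrite (negbTE exi) !andbF.
- have xi : (x == i) = false by apply/negbTE/eqP => e; rewrite e iv ltnn in xk.
  by rewrite xi andbF ltnS leqNgt xk.
- have -> : x = i by apply: val_inj.
  rewrite eqxx andbT iv ltnSn /= orbF.
  apply/existsP/existsP => [[y /andP[_ h]]|[y h]]; exists y => //.
  by rewrite h andbT; move: h; rewrite /edge => /andP[].
Qed.

Definition inv k (V : {set 'I_n}) (Ls : seq ('I_n * 'I_n)) :=
 [/\ (forall x, x \in V -> x < k),
     (forall x y, (x,y) \in Ls -> [/\ x < y, y < k & x \notin V]),
     (forall x : 'I_n, x < k -> hasR P x = (x \in V) || [exists y, (x,y) \in Ls]),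
     (forall x y y', (x,y) \in Ls -> (x,y') \in Ls -> y = y') &
     [/\ (forall x x' y, (x,y) \in Ls -> (x',y) \in Ls -> x = x'),
     (forall y : 'I_n, y < k -> hasL P y = [exists x, (x,y) \in Ls]) &
     #|V| = #|vacn P k| ] ].

Lemma inv_all k : k <= n -> inv k (phi_state P k).1 (phi_state P k).2.
Proof.
elim: k => [_|k IH hk].
  rewrite /phi_state take0 /=; split.
  - by move=> x; rewrite inE.
  - by move=> x y; rewrite in_nil.
  - by move=> x; rewrite ltn0.
  - by move=> x y y'; rewrite in_nil.
  split.
  - by move=> x x' y; rewrite in_nil.
  - by move=> y; rewrite ltn0.
  - have -> : vacn P 0 = set0 by apply/setP => x; rewrite !inE ltn0.
    by [].
rewrite (stS _ hk); move: (IH (ltnW hk)); case: (phi_state P k) => V Ls.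
rewrite (stepE hP) /=.
set i := Ordinal hk.
have iv : nat_of_ord i = k by [].
case=> i1 i2 i3 i4 [i5 i6 i7].
set x0 := chosen P V i.
have neq_i : forall z : 'I_n, z < k -> (z == i) = false.
  by move=> z zk; apply/negbTE/eqP => e; rewrite e iv ltnn in zk.
have hx0 : hasL P i -> x0 \in V /\ #|[set z in V | x0 <= z]| = gamma P i.
  move=> hL; have /andP[g0 g1] := gamma_bounds hL.
  have lt : (gamma P i).-1 < #|V| by rewrite i7 -iv; move: g0 g1; clear; lia.
  have [h1 h2] := nth_sort_rank i lt.
  by split => //; rewrite h2 prednK.
have x0k : hasL P i -> x0 < k by move=> /hx0 [/i1].
have iV : i \notin V by apply/negP => /i1; rewrite iv ltnn.
split.
- move=> z; rewrite mem_upd => /orP[/andP[_ /eqP->]|/andP[/i1 h _]].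
    by rewrite iv.
  by rewrite ltnS ltnW.
- move=> a b; rewrite memLs => /orP[/andP[hL /eqP[-> ->]]|hab].
    split; [by rewrite iv x0k | by rewrite iv |].
    by rewrite mem_upd hL eqxx /= andbF orbF neq_i ?x0k // andbF.
  have [ab bk aV] := i2 _ _ hab.
  split => //; first by rewrite ltnS ltnW.
  rewrite mem_upd (negbTE aV) andFb orbF neq_i ?andbF //.
  exact: ltn_trans ab bk.
- move=> z; rewrite ltnS leq_eqVlt => /orP[/eqP zk | zk].
    have -> : z = i by apply: val_inj; rewrite /= zk.
    rewrite mem_upd eqxx andbT (negbTE iV) andFb orbF.
    have -> : [exists y, (i, y) \in (if hasL P i then (x0, i) :: Ls else Ls)] = false.
      apply/negbTE; rewrite negb_exists; apply/forallP => y; rewrite memLs negb_or.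
      apply/andP; split.
        apply/negP => /andP[hL /eqP[e _]]; have := x0k hL; by rewrite -e iv ltnn.
      apply/negP => /i2 [iy yk _]; move: iy yk; rewrite iv; clear; lia.
    by rewrite orbF.
  rewrite (i3 z zk) mem_upd neq_i // andbF /=.
  case: (boolP (hasL P i && (z == x0))) => [/andP[hL /eqP ez]|h].
    have zV : z \in V by rewrite ez; exact: (proj1 (hx0 hL)).
    rewrite zV /=; apply/esym/existsP; exists i.
    by rewrite memLs hL ez eqxx.
  rewrite andbT; congr (_ || _); apply: eq_existsb => y; rewrite memLs.
  case: (boolP (hasL P i)) h => hL h //=.
  by move: h => /= /negbTE h; rewrite xpair_eqE h.
- move=> a y y'; rewrite !memLs.
  move=> /orP[/andP[hL /eqP[ea ->]]|h1] /orP[/andP[hL' /eqP[ea' ->]]|h2] //.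
  + by move: h2; rewrite ea => /i2 [_ _]; rewrite (proj1 (hx0 hL)).
  + by move: h1; rewrite ea' => /i2 [_ _]; rewrite (proj1 (hx0 hL')).
  + exact: i4 h1 h2.
split.
- move=> a a' y; rewrite !memLs.
  move=> /orP[/andP[hL /eqP[-> ey]]|h1] /orP[/andP[_ /eqP[-> ey']]|h2] //.
  + by move: h2; rewrite ey => /i2 [_]; rewrite iv ltnn.
  + by move: h1; rewrite ey' => /i2 [_]; rewrite iv ltnn.
  + exact: i5 h1 h2.
- move=> y; rewrite ltnS leq_eqVlt => /orP[/eqP yk | yk].
    have -> : y = i by apply: val_inj; rewrite /= yk.
    case: (boolP (hasL P i)) => hL.
      by apply/esym/existsP; exists x0; rewrite inE eqxx.
    apply/esym/negbTE; rewrite negb_exists; apply/forallP => x /=.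
    by apply/negP => /i2 [_]; rewrite iv ltnn.
  rewrite (i6 y yk); apply: eq_existsb => x.
  by rewrite memLs xpair_eqE neq_i // !andbF.
- have h1 := card_upd (hasR P i) (fun hL => proj1 (hx0 hL)) iV.
  have iv' : i \notin vacn P k by rewrite inE iv ltnn.
  have h2 := card_upd (hasR P i) (@lnb_in i) iv'.
  rewrite vacnS -/i; apply/eqP; rewrite -(eqn_add2r (hasL P i)) h1 h2 i7 //.
Qed.

End Run.

Section Final.
Variable P : {set {set 'I_n}}.
Hypothesis hP : partition P [set: 'I_n].

Lemma stS' (i : 'I_n) : phi_state P i.+1 = phi_step P (phi_state P i) i.
Proof. rewrite (stS _ (ltn_ord i)); congr (phi_step _ _ _); exact: val_inj. Qed.

Lemma Ls_stepE (i : 'I_n) p : (p \in (phi_state P i.+1).2) =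
  (hasL P i && (p == (chosen P (phi_state P i).1 i, i))) || (p \in (phi_state P i).2).
Proof.
rewrite stS'; case: (phi_state P i) => V Ls; by rewrite (stepE hP) /= memLs.
Qed.

Lemma Ls_sub k m : k <= m -> m <= n ->
  {subset (phi_state P k).2 <= (phi_state P m).2}.
Proof.
elim: m => [|m IH] km mn p.
  by move: km; rewrite leqn0 => /eqP ->.
case: (ltngtP k m.+1) km => // [km _|-> _] //.
move=> hp; have hm : m < n by [].
have := Ls_stepE (Ordinal hm) p; rewrite /= => ->.
by rewrite (IH km (ltnW hm) p hp) orbT.
Qed.

Lemma Ls_low k m : k <= m -> m <= n -> forall a b,
  (a,b) \in (phi_state P m).2 -> b < k -> (a,b) \in (phi_state P k).2.
Proof.
elim: m => [|m IH] km mn a b.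
  by move: km; rewrite leqn0 => /eqP ->.
case: (ltngtP k m.+1) km => // [km _|-> _] //.
have hm : m < n by [].
have := Ls_stepE (Ordinal hm) (a,b); rewrite /= => ->.
case/orP => [/andP[_ /eqP[_ ->]] /= bk|h bk].
  by move: km bk; clear; lia.
exact: (IH km (ltnW hm) a b h bk).
Qed.

Let Inv := inv_all hP (leqnn n).

Lemma Vn0 : (phi_state P n).1 = set0.
Proof.
case: Inv => _ _ _ _ [_ _ h].
apply/eqP; rewrite -cards_eq0 h cards_eq0; apply/eqP/setP => x.
rewrite !inE; apply/negbTE; rewrite negb_and negb_exists; apply/orP; right.
by apply/forallP => y; rewrite leqNgt ltn_ord.
Qed.

Lemma F_lt x y : phiE P x y -> x < y.
Proof. by case: Inv => _ h _ _ _ /h []. Qed.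
Lemma F_r x y y' : phiE P x y -> phiE P x y' -> y = y'.
Proof. by case: Inv => _ _ _ h _; exact: h. Qed.
Lemma F_l x x' y : phiE P x y -> phiE P x' y -> x = x'.
Proof. by case: Inv => _ _ _ _ [h _ _]; exact: h. Qed.

Lemma phi_part : partition (phi P) [set: 'I_n].
Proof. exact (Q_part (phiE P)). Qed.

Lemma edge_phi x y : edge (phi P) x y = phiE P x y.
Proof. exact (edgeQ F_lt F_r F_l x y). Qed.

Lemma hasR_phi x : hasR (phi P) x = hasR P x.
Proof.
case: Inv => _ _ h _ _; rewrite (h x (ltn_ord x)) Vn0 inE /=.
by apply: eq_existsb => y; rewrite edge_phi.
Qed.

Lemma hasL_phi x : hasL (phi P) x = hasL P x.
Proof.
case: Inv => _ _ _ _ [_ h _]; rewrite (h x (ltn_ord x)).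
by apply: eq_existsb => y; rewrite edge_phi.
Qed.

Lemma V_char k : k <= n -> forall x, (x \in (phi_state P k).1) =
  (x < k) && [exists y : 'I_n, (k <= y) && ((x,y) \in (phi_state P n).2)].
Proof.
move=> kn x; have := inv_all hP kn; case=> i1 i2 i3 i4 _.
case: Inv => j1 j2 j3 j4 _.
apply/idP/andP => [xV|[xk /existsP[y /andP[ky hy]]]].
- have xk := i1 _ xV; split => //.
  have := i3 x xk; rewrite xV (j3 x (ltn_ord x)) Vn0 inE /= => /existsP[y hy].
  apply/existsP; exists y; rewrite hy andbT leqNgt; apply/negP => yk.
  by have [_ _] := i2 _ _ (Ls_low kn (leqnn n) hy yk); rewrite xV.
- have := j3 x (ltn_ord x); rewrite Vn0 inE /=.
  have -> : [exists y, (x, y) \in (phi_state P n).2] by apply/existsP; exists y.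
  rewrite (i3 x xk) => /orP[//|/existsP[y' hy']].
  have hy'n := Ls_sub kn (leqnn n) hy'.
  have [_ y'k _] := i2 _ _ hy'.
  by move: ky; rewrite (j4 _ _ _ hy hy'n) leqNgt y'k.
Qed.

Lemma vacant_phi (i : 'I_n) : vacn (phi P) i = (phi_state P i).1.
Proof.
apply/setP => x; rewrite V_char; last exact: ltnW (ltn_ord i).
rewrite inE.
congr (_ && _); apply: eq_existsb => y; by rewrite edge_phi.
Qed.

Lemma chosen_facts (i : 'I_n) : hasL P i ->
  let V := (phi_state P i).1 in let x0 := chosen P V i in
  [/\ (x0, i) \in (phi_state P n).2, x0 \in V &
      #|[set z in V | x0 <= z]| = gamma P i].
Proof.
move=> hL V x0.
have [i1 i2 i3 i4 [i5 i6 i7]] := inv_all hP (ltnW (ltn_ord i)).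
have /andP[g0 g1] := gamma_bounds hL.
have lt : (gamma P i).-1 < #|V| by rewrite /V i7; move: g0 g1; clear; lia.
have [h1 h2] := nth_sort_rank i lt.
split => //; last by rewrite h2 prednK.
apply: (Ls_sub (ltn_ord i) (leqnn n)).
by rewrite Ls_stepE hL eqxx.
Qed.

Lemma lnb_phi (i : 'I_n) : hasL P i ->
  lnb (phi P) i = chosen P (phi_state P i).1 i.
Proof.
move=> hL; have [h _ _] := chosen_facts hL.
have hL' : hasL (phi P) i by rewrite hasL_phi.
have e := lnb_edge hL'.
rewrite edge_phi in e.
exact: (F_l e h).
Qed.

Lemma gamma_phi (i : 'I_n) : hasL P i ->
  gamma (phi P) i = #|vacn P i| + 1 - gamma P i.
Proof.
move=> hL; have [_ h1 h2] := chosen_facts hL.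
have hL' : hasL (phi P) i by rewrite hasL_phi.
have [_ _ _ _ [_ _ i7]] := inv_all hP (ltnW (ltn_ord i)).
rewrite (gammaE hL') vacant_phi lnb_phi // -i7.
rewrite -(rank_compl h1) h2; lia.
Qed.

Lemma chosen_phi (i : 'I_n) : hasL P i ->
  chosen (phi P) (vacn P i) i = lnb P i.
Proof.
move=> hL; rewrite /chosen gamma_phi //.
have /andP[g0 g1] := gamma_bounds hL.
have lt : (#|vacn P i| + 1 - gamma P i).-1 < #|vacn P i|.
  by move: g0 g1; clear; lia.
have [h1 h2] := nth_sort_rank i lt.
have j1 := lnb_in hL.
apply: (rank_inj h1 j1); rewrite h2.
have := rank_compl j1; rewrite -(gammaE hL).
move: g0 g1; clear; lia.
Qed.

Lemma inv2 k : k <= n ->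
  (phi_state (phi P) k).1 = vacn P k /\
  forall a b, ((a,b) \in (phi_state (phi P) k).2) = edge P a b && (b < k).
Proof.
elim: k => [_|k IH hk].
  rewrite /phi_state take0 /=; split.
    by apply/setP => x; rewrite !inE ?ltn0.
  by move=> a b; rewrite in_nil ?ltn0 ?andbF.
rewrite (stS _ hk); move: (IH (ltnW hk)); case: (phi_state (phi P) k) => V Ls [eV eL].
rewrite /= in eV eL; rewrite (stepE phi_part) /= eV hasL_phi hasR_phi.
set i := Ordinal hk.
have iv : nat_of_ord i = k by [].
split.
  rewrite (vacnS hP); case: (boolP (hasL P i)) => hL.
    by rewrite (chosen_phi hL).
  by rewrite /upd /i.
move=> a b; rewrite memLs eL ltnS.
case: (eqVneq (b : nat) k) => bk.
- have eb : b = i by apply: val_inj.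
  rewrite eb iv ltnn leqnn andbF andbT orbF xpair_eqE eqxx andbT.
  case: (boolP (edge P a i)) => e.
    have hL : hasL P i by apply/existsP; exists a.
    by rewrite hL -iv chosen_phi // (edge_l hP (lnb_edge hL) e) eqxx.
  apply/negbTE/negP => /andP[hL /eqP ea].
  move: e; rewrite ea -iv chosen_phi //; by rewrite lnb_edge.
-   have -> : (b <= k) = (b < k) by rewrite ltn_neqAle bk.
  by rewrite xpair_eqE (_ : (b == i) = false) ?andbF //; apply/negbTE; apply: contra bk => /eqP ->.
Qed.

Lemma phi_inv : phi (phi P) = P.
Proof.
have [_ h] := inv2 (leqnn n).
apply: (partition_of_edges hP) => a b.
by rewrite /phiE h ltn_ord andbT.
Qed.

End Final.

End Main.

Theorem lemma2p1 (n : nat) (P : {set {set 'I_n}}) :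
  0 < n -> partition P [set: 'I_n] ->
  [/\ (forall i : 'I_n, closer P i || transient P i ->
          gamma P i <= #|Vcur P i|),
      partition (phi P) [set: 'I_n],
      (forall x y : 'I_n, edge (phi P) x y = phiE P x y),
      phi (phi P) = P
    & ptype (phi P) = ptype P].
Proof.
move=> _ hP; split.
- move=> i; rewrite (closerE hP) (transientE hP) => h.
  have hL : hasL P i by case/orP: h => /andP[].
  have [_ _ _ _ [_ _ i7]] := inv_all hP (ltnW (ltn_ord i)).
  rewrite /Vcur i7; by case/andP: (gamma_bounds hL).
- exact: phi_part.
- exact: edge_phi hP.
- exact: phi_inv hP.
- have hQ := phi_part P.
  rewrite /ptype; congr (_, _, _, _); apply/setP => x; rewrite !inE.
  + by rewrite (openerE hQ) (openerE hP) (hasR_phi hP) (hasL_phi hP).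
  + by rewrite (closerE hQ) (closerE hP) (hasR_phi hP) (hasL_phi hP).
  + by rewrite (singletonE hQ) (singletonE hP) (hasR_phi hP) (hasL_phi hP).
  + by rewrite (transientE hQ) (transientE hP) (hasR_phi hP) (hasL_phi hP).
Qed.
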